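(* Let $d\geq 7$. There exists no smooth function $f:[0,\infty)\to\mathbb{R}$ solving $$f''(y)+\left(\frac{d-1}{y}-\frac{y}{2}\right)f'(y)-\frac{d-1}{2y^2}\sin(2f(y))=0\quad\text{for all } y>0$$ and satisfying both of the following conditions: (i) $f(0)=0$ and $f'(0)=a$ for some $a>0$; (ii) $\lim_{y\to\infty}f(y)=b$ for some $b\in\mathbb{R}$, and $\lim_{y\to\infty}y^3f'(y)=-(d-1)\sin(2b)$.
   Context: The equation is the ordinary differential equation for self-similar shrinking solutions $v(t,r)=f(r/\sqrt{-t})$, $t<0$, of the equivariant harmonic map heat flow $v_t=v_{rr}+\frac{d-1}{r}v_r-\frac{d-1}{2r^2}\sin(2v)$ from $\mathbb{R}^d$ to $S^d$. Here ''smooth'' means $f\in C^\infty([0,\infty))$. *)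

(* Defs.v *)
From Stdlib Require Import Reals.
Open Scope R_scope.

(* One-sided derivative on the half-line [0, oo):
   g has derivative l at x >= 0 within [0,oo), i.e.
   lim_{h -> 0, x + h >= 0, h <> 0} (g (x+h) - g x) / h = l.
   At x > 0 this is the ordinary derivative; at x = 0 it is the right derivative. *)
Definition halfline_deriv (g : R -> R) (x l : R) : Prop :=
  forall eps : R, 0 < eps ->
    exists delta : R, 0 < delta /\
      forall h : R, h <> 0 -> 0 <= x + h -> Rabs h < delta ->
        Rabs ((g (x + h) - g x) / h - l) < eps.

(* f in C^oo([0,oo)): there is a sequence of functions D n (D n = n-th
   derivative of f on [0,oo), one-sided at 0) with D 0 = f on [0,oo) and
   D (S n) the derivative of D n at every point of [0,oo). *)
Definition smooth_halfline (f : R -> R) : Prop :=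
  exists D : nat -> R -> R,
    (forall x, 0 <= x -> D O x = f x) /\
    (forall (n : nat) (x : R), 0 <= x -> halfline_deriv (D n) x (D (S n) x)).

Definition lim_at_infty (g : R -> R) (L : R) : Prop :=
  forall eps : R, 0 < eps ->
    exists M : R, forall y : R, M < y -> Rabs (g y - L) < eps.

(* Main.v *)
Require Import Defs.
From Stdlib Require Import Reals Lra.
From Coquelicot Require Import Coquelicot.
Open Scope R_scope.

Lemma hd_pos (g : R -> R) x l : 0 < x -> halfline_deriv g x l -> is_derive g x l.
Proof.
 intros Hx H. apply is_derive_Reals. intros eps Heps.
 destruct (H eps Heps) as [del [Hdel Hh]].
 assert (Hm: 0 < Rmin del x) by (apply Rmin_glb_lt; lra).
 exists (mkposreal _ Hm). intros h Hh0 Hhd. simpl in Hhd.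
 apply Hh; auto.
 - pose proof (Rmin_r del x). pose proof (Rle_abs (-h)) as H1. rewrite Rabs_Ropp in H1. lra.
 - pose proof (Rmin_l del x). lra.
Qed.

Lemma hd_cont0 (g : R -> R) l : halfline_deriv g 0 l ->
  forall eps, 0 < eps -> exists del, 0 < del /\ forall h, 0 < h < del -> Rabs (g h - g 0) < eps.
Proof.
 intros H eps He. destruct (H 1 Rlt_0_1) as [d1 [Hd1 Hh]].
 set (m := Rabs l + 1). assert (0 < m) by (unfold m; pose proof (Rabs_pos l); lra).
 exists (Rmin d1 (eps/m)). split.
 { apply Rmin_glb_lt; [lra| apply Rdiv_lt_0_compat; lra]. }
 intros h [h0 hd].
 assert (Hq := Hh h ltac:(lra) ltac:(lra)
   ltac:(rewrite Rabs_right; [pose proof (Rmin_l d1 (eps/m)); lra | lra])).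
 rewrite Rplus_0_l in Hq.
 set (q := (g h - g 0)/h) in Hq.
 assert (E: g h - g 0 = q * h) by (unfold q; field; lra).
 rewrite E, Rabs_mult, (Rabs_right h) by lra.
 assert (Rabs q < m).
 { pose proof (Rabs_triang (q - l) l) as H1. replace (q - l + l) with q in H1 by ring. unfold m. lra. }
 assert (h < eps/m) by (pose proof (Rmin_r d1 (eps/m)); lra).
 apply Rle_lt_trans with (m*h). { apply Rmult_le_compat_r; lra. }
 apply Rlt_le_trans with (m*(eps/m)). { apply Rmult_lt_compat_l; lra. }
 right; field; lra.
Qed.

Lemma D_mult (f g : R -> R) x a b : is_derive f x a -> is_derive g x b ->
  is_derive (fun t => f t * g t) x (a * g x + f x * b).
Proof. intros. apply (is_derive_mult f g x a b); auto. intros; apply Rmult_comm. Qed.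

Lemma D_plus (f g : R -> R) x a b : is_derive f x a -> is_derive g x b ->
  is_derive (fun t => f t + g t) x (a + b).
Proof. intros. apply (is_derive_plus f g x a b); auto. Qed.

Lemma D_sin2f (f : R -> R) x a : is_derive f x a ->
  is_derive (fun t => sin (2 * f t)) x ((2 * a) * cos (2 * f x)).
Proof.
 intros H. apply (is_derive_comp sin (fun t => 2 * f t) x (cos (2 * f x)) (2 * a)).
 - apply is_derive_sin.
 - apply is_derive_scal; auto.
Qed.

Lemma D_eq (f : R -> R) x l l' : is_derive f x l -> l = l' -> is_derive f x l'.
Proof. intros; subst; auto. Qed.

Lemma exp_le' x y : x <= y -> exp x <= exp y.
Proof. intros [H|H]; [left; apply exp_increasing; auto | subst; right; auto]. Qed.

Theorem theorem1 (d : nat) (Hd : (7 <= d)%nat) :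
  ~ exists (f f1 f2 : R -> R),
      smooth_halfline f /\
      (forall y, 0 <= y -> halfline_deriv f y (f1 y)) /\
      (forall y, 0 <= y -> halfline_deriv f1 y (f2 y)) /\
      (forall y, 0 < y ->
         f2 y + ((INR d - 1) / y - y / 2) * f1 y
           - (INR d - 1) / (2 * y ^ 2) * sin (2 * f y) = 0) /\
      f 0 = 0 /\
      (exists a : R, 0 < a /\ f1 0 = a) /\
      (exists b : R, lim_at_infty f b /\
         lim_at_infty (fun y => y ^ 3 * f1 y) (- (INR d - 1) * sin (2 * b))).
Proof.
 intros [f [f1 [f2 [_ [Hf [Hf1 [Hode [Hf0 [[a [Ha Hfa]] [b [_ Hlim]]]]]]]]]]].
 set (k := INR d - 1) in *.
 assert (hk: 6 <= k).
 { unfold k. apply le_INR in Hd. replace (INR 7) with 7 in Hd by (simpl; ring). lra. }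
 set (rho := fun y => exp (k * ln y - y*y/4)).
 set (Q := fun y => ((3-k)*y + y^3/2) * (f1 y * f1 y) + k/2 * (sin (2 * f y) * f1 y)).
 set (B := fun y => rho y * Q y).
 set (Bd := fun y => rho y * (((3-k+y^2/2)*f1 y + k * sin(2*f y)/(2*y))^2
                    + f1 y ^2 * (k-6 + k*(1+cos(2*f y))))).
 assert (HB: forall y, 0 < y -> is_derive B y (Bd y)).
 { intros y Hy.
   pose proof (hd_pos f y (f1 y) Hy (Hf y (Rlt_le _ _ Hy))) as hf.
   pose proof (hd_pos f1 y (f2 y) Hy (Hf1 y (Rlt_le _ _ Hy))) as hf1.
   pose proof (Hode y Hy) as Ho.
   assert (drho: is_derive rho y (rho y * (k/y - y/2))).
   { unfold rho. auto_derive. { exact Hy. } replace (k * ln y + - (y * y * / 4)) with (k * ln y - y * y / 4) by (unfold Rdiv; ring). field. lra. }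
   assert (dA: is_derive (fun t => (3-k)*t + t^3/2) y ((3-k) + 3*y^2/2))
     by (auto_derive; [exact I | field]).
   assert (dff: is_derive (fun t => f1 t * f1 t) y (f2 y * f1 y + f1 y * f2 y))
     by (apply D_mult; exact hf1).
   assert (ds := D_sin2f f y (f1 y) hf).
   assert (dsf := D_mult _ _ y _ _ ds hf1).
   assert (dQ := D_plus _ _ y _ _ (D_mult _ _ y _ _ dA dff) (is_derive_scal _ y (k/2) _ dsf)).
   assert (dB := D_mult _ _ y _ _ drho dQ).
   unfold B. eapply D_eq. { exact dB. }
   assert (E2 : f2 y = k/(2*y^2)*sin(2*f y) - (k/y - y/2)*f1 y).
   { rewrite <- (Rplus_0_r (k/(2*y^2)*sin(2*f y) - (k/y - y/2)*f1 y)), <- Ho. ring. }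
   unfold Bd, Q. rewrite E2. match goal with |- ?a = ?b => change (@eq R a b) end. field. lra. }
 assert (HBd: forall y, 0 < y -> 0 <= Bd y).
 { intros y Hy. unfold Bd. apply Rmult_le_pos. { unfold rho; left; apply exp_pos. }
   pose proof (COS_bound (2 * f y)).
   apply Rplus_le_le_0_compat. { apply pow2_ge_0. }
   apply Rmult_le_pos. { apply pow2_ge_0. } nra. }
 assert (Mono: forall u v, 0 < u -> u <= v -> B u <= B v).
 { intros u v Hu Huv. destruct (Req_dec u v) as [->|Hne]; [lra|].
   destruct (MVT_gen B u v Bd) as [c [Hc E]].
   - intros x Hx. rewrite Rmin_left, Rmax_right in Hx by lra. apply HB; lra.
   - intros x Hx. rewrite Rmin_left, Rmax_right in Hx by lra.
     apply derivable_continuous_pt. exists (Bd x). apply is_derive_Reals, HB; lra.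
   - rewrite Rmin_left, Rmax_right in Hc by lra.
     assert (0 <= Bd c) by (apply HBd; lra).
     assert (0 <= Bd c * (v - u)) by (apply Rmult_le_pos; lra). lra. }
 destruct (hd_cont0 f1 (f2 0) (Hf1 0 (Rle_refl 0)) (a/2)) as [d1 [Hd1 Hc1]]; [lra|].
 destruct (hd_cont0 f (f1 0) (Hf 0 (Rle_refl 0)) 1) as [d2 [Hd2 Hc2]]; [lra|].
 set (del := Rmin 1 (Rmin d1 d2)).
 assert (Hdel: 0 < del /\ del <= 1 /\ del <= d1 /\ del <= d2).
 { unfold del. pose proof (Rmin_l 1 (Rmin d1 d2)). pose proof (Rmin_r 1 (Rmin d1 d2)).
   pose proof (Rmin_l d1 d2). pose proof (Rmin_r d1 d2).
   split; [|lra]. apply Rmin_glb_lt; [lra|]. apply Rmin_glb_lt; lra. }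
 assert (Hsm: forall y, 0 < y < del -> a/2 < f1 y < 3*a/2 /\ -1 < f y < 1).
 { intros y Hy. destruct (Rabs_def2 _ _ (Hc1 y ltac:(lra))).
   destruct (Rabs_def2 _ _ (Hc2 y ltac:(lra))). rewrite Hfa in *. rewrite Hf0 in *. lra. }
 assert (HBpos: forall y, 0 < y < del -> 0 < Bd y).
 { intros y Hy. destruct (Hsm y Hy) as [[h1 h2] [h3 h4]].
   pose proof PI2_1.
   assert (0 < cos (f y)) by (apply cos_gt_0; lra).
   assert (Hc: 0 < 1 + cos (2 * f y)) by (rewrite cos_2a_cos; nra).
   unfold Bd. apply Rmult_lt_0_compat. { unfold rho; apply exp_pos. }
   assert (0 < f1 y ^ 2 * (k - 6 + k * (1 + cos (2 * f y)))).
   { apply Rmult_lt_0_compat. { nra. } nra. }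
   pose proof (pow2_ge_0 ((3 - k + y ^ 2 / 2) * f1 y + k * sin (2 * f y) / (2 * y))). lra. }
 set (y0 := del/2).
 set (D := B y0 - B (y0/2)).
 assert (HD: 0 < D).
 { unfold D. destruct (MVT_gen B (y0/2) y0 Bd) as [c [Hc E]].
   - intros x Hx. rewrite Rmin_left, Rmax_right in Hx by (unfold y0; lra). apply HB; unfold y0 in *; lra.
   - intros x Hx. rewrite Rmin_left, Rmax_right in Hx by (unfold y0; lra).
     apply derivable_continuous_pt. exists (Bd x). apply is_derive_Reals, HB; unfold y0 in *; lra.
   - rewrite Rmin_left, Rmax_right in Hc by (unfold y0; lra).
     rewrite E. apply Rmult_lt_0_compat; [apply HBpos|]; unfold y0 in *; lra. }
 set (M := (Rabs (3-k) + 1) * (9*a*a/4) + k/2*(3*a/2)).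
 assert (HM0: 0 <= M).
 { unfold M. pose proof (Rabs_pos (3-k)). apply Rplus_le_le_0_compat; nra. }
 assert (Hsmall: forall y, 0 < y < del -> - (M * y) <= B y).
 { intros y Hy. destruct (Hsm y Hy) as [[h1 h2] [h3 h4]].
   assert (Hr: rho y <= y).
   { unfold rho. apply Rle_trans with (exp (ln y)); [|rewrite exp_ln by lra; lra]. apply exp_le'.
     assert (ln y <= 0). { rewrite <- ln_1. apply ln_le; lra. }
     assert ((k-1) * ln y <= 0) by nra. nra. }
   assert (Hr0: 0 < rho y) by (unfold rho; apply exp_pos).
   assert (HQ: Rabs (Q y) <= M).
   { unfold Q, M.
     assert (H1: Rabs ((3-k)*y + y^3/2) <= Rabs (3-k) + 1).
     { eapply Rle_trans. apply Rabs_triang. rewrite Rabs_mult, (Rabs_right y) by lra.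
       assert (0 <= y^3) by (apply pow_le; lra).
       assert (y^3 <= 1) by (rewrite <- (pow1 3); apply pow_incr; lra).
       rewrite (Rabs_right (y^3/2)) by lra.
       pose proof (Rabs_pos (3-k)). nra. }
     assert (H2: Rabs (f1 y * f1 y) <= 9*a*a/4).
     { rewrite Rabs_right by nra. nra. }
     assert (H3: Rabs (sin (2 * f y) * f1 y) <= 3*a/2).
     { rewrite Rabs_mult, (Rabs_right (f1 y)) by lra.
       assert (Rabs (sin (2 * f y)) <= 1) by (apply Rabs_le; apply SIN_bound).
       pose proof (Rabs_pos (sin (2 * f y))). nra. }
     eapply Rle_trans. apply Rabs_triang.
     rewrite (Rabs_mult ((3-k)*y + y^3/2)), (Rabs_mult (k/2)). rewrite (Rabs_right (k/2)) by lra.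
     apply Rplus_le_compat.
     - apply Rmult_le_compat; try apply Rabs_pos; auto.
     - apply Rmult_le_compat_l; [lra|auto]. }
   unfold B. pose proof (Rle_abs (- Q y)) as HQ'. rewrite Rabs_Ropp in HQ'.
   assert (rho y * Rabs (Q y) <= y * M).
   { apply Rmult_le_compat; try lra. apply Rabs_pos. }
   nra. }
 assert (HBy0: 0 < B y0).
 { set (eps := Rmin (y0/2) (D / (2 * (M + 1)))).
   assert (He: 0 < eps /\ eps <= y0/2 /\ eps <= D / (2*(M+1))).
   { unfold eps. split; [|split; [apply Rmin_l|apply Rmin_r]].
     apply Rmin_glb_lt; [unfold y0; lra|]. apply Rdiv_lt_0_compat; lra. }
   assert (h1 := Hsmall eps ltac:(unfold y0 in *; lra)).
   assert (h2 := Mono eps (y0/2) ltac:(lra) ltac:(lra)).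
   assert (M * eps <= D/2).
   { apply Rle_trans with ((M+1) * (D / (2*(M+1)))).
     { apply Rmult_le_compat; lra. }
     right; field; lra. }
   unfold D in *. lra. }
 destruct (Hlim 1 Rlt_0_1) as [N HN].
 set (C := Rabs (- k * sin (2 * b)) + 1).
 set (M2 := (Rabs (3-k) + 1) * (C*C) + k/2*C).
 assert (HC: 0 < C) by (unfold C; pose proof (Rabs_pos (- k * sin (2 * b))); lra).
 assert (HM2: 0 <= M2) by (unfold M2; pose proof (Rabs_pos (3-k)); nra).
 set (t := B y0 / (M2 + 1)).
 assert (Ht: 0 < t) by (unfold t; apply Rdiv_lt_0_compat; lra).
 set (Y := Rmax (Rmax N y0) (Rmax 1 (Rmax (4*k+4) (Rabs (ln t)))) + 1).
 assert (HY: N < Y /\ y0 < Y /\ 1 < Y /\ 4*k+4 < Y /\ Rabs (ln t) < Y).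
 { unfold Y.
   pose proof (Rmax_l (Rmax N y0) (Rmax 1 (Rmax (4*k+4) (Rabs (ln t))))).
   pose proof (Rmax_r (Rmax N y0) (Rmax 1 (Rmax (4*k+4) (Rabs (ln t))))).
   pose proof (Rmax_l N y0). pose proof (Rmax_r N y0).
   pose proof (Rmax_l 1 (Rmax (4*k+4) (Rabs (ln t)))).
   pose proof (Rmax_r 1 (Rmax (4*k+4) (Rabs (ln t)))).
   pose proof (Rmax_l (4*k+4) (Rabs (ln t))). pose proof (Rmax_r (4*k+4) (Rabs (ln t))).
   lra. }
 destruct HY as [HY1 [HY2 [HY3 [HY4 HY5]]]].
 assert (Hrho: rho Y <= t).
 { unfold rho. rewrite <- (exp_ln t) by lra. apply exp_le'.
   assert (ln Y < Y).
   { assert (Y < exp Y) by (pose proof (exp_ineq1 Y ltac:(lra)); lra).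
     rewrite <- (ln_exp Y) at 2. apply ln_increasing; lra. }
   assert (k * ln Y <= k * Y) by (apply Rmult_le_compat_l; lra).
   pose proof (Rle_abs (- ln t)) as Ha'. rewrite Rabs_Ropp in Ha'.
   nra. }
 assert (HQY: Rabs (Q Y) <= M2).
 { assert (HN' := HN Y HY1).
   assert (Hw: Rabs (Y^3 * f1 Y) < C).
   { pose proof (Rabs_triang (Y ^ 3 * f1 Y - - k * sin (2 * b)) (- k * sin (2 * b))) as T.
     replace (Y ^ 3 * f1 Y - - k * sin (2 * b) + - k * sin (2 * b)) with (Y^3 * f1 Y) in T by ring.
     unfold C. lra. }
   rewrite Rabs_mult, (Rabs_right (Y^3)) in Hw by (simpl; nra).
   set (w := Rabs (f1 Y)) in *.
   assert (Hw0: 0 <= w) by apply Rabs_pos.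
   assert (Y <= Y^3) by (simpl; nra).
   assert (HwY: w * Y <= C) by nra.
   assert (HwC: w <= C) by nra.
   unfold Q, M2.
   eapply Rle_trans. apply Rabs_triang.
   rewrite !Rabs_mult. rewrite (Rabs_right (k/2)) by lra.
   assert (Rabs (sin (2 * f Y)) <= 1) by (apply Rabs_le; apply SIN_bound).
   assert (H1: Rabs ((3-k)*Y + Y^3/2) * (w * w) <= (Rabs (3 - k) + 1) * (C * C)).
   { apply Rle_trans with ((Rabs (3-k) * Y + Y^3/2) * (w*w)).
     { apply Rmult_le_compat_r; [nra|].
       eapply Rle_trans. apply Rabs_triang. rewrite Rabs_mult, (Rabs_right Y) by lra.
       rewrite (Rabs_right (Y^3/2)) by (simpl; nra). lra. }
     pose proof (Rabs_pos (3-k)).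
     assert (Rabs (3-k) * (w*Y) * w <= Rabs (3-k) * C * C).
     { apply Rmult_le_compat.
       - apply Rmult_le_pos; [lra| apply Rmult_le_pos; lra].
       - lra.
       - apply Rmult_le_compat_l; lra.
       - lra. }
     assert ((w * Y^3) * w <= C * C) by (apply Rmult_le_compat; nra).
     nra. }
   assert (H2: k / 2 * (Rabs (sin (2 * f Y)) * w) <= k/2 * C).
   { apply Rmult_le_compat_l; [lra|]. pose proof (Rabs_pos (sin (2 * f Y))). nra. }
   unfold w in *. lra. }
 assert (HBY: B Y <= t * M2).
 { unfold B. assert (0 < rho Y) by (unfold rho; apply exp_pos).
   pose proof (Rle_abs (Q Y)).
   apply Rle_trans with (rho Y * Rabs (Q Y)). { apply Rmult_le_compat_l; lra. }
   apply Rmult_le_compat; try lra. apply Rabs_pos. }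
 assert (t * M2 < B y0).
 { unfold t. apply Rlt_le_trans with (B y0 / (M2 + 1) * (M2 + 1)).
   { apply Rmult_lt_compat_l; [exact Ht| lra]. } right; field; lra. }
 assert (B y0 <= B Y) by (apply Mono; unfold y0 in *; lra).
 lra.
Qed.
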